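(* Let $\mathcal{A}$ be a pOC with state set $Q$ whose underlying chain $\mathcal{X}$ is strongly connected, with trend $t\ge0$. Assume $[p{\downarrow}]>0$ for all $p\in Q$. Let $v$ be a potential and $|v|=v_{\max}-v_{\min}$. Let $c^{(0)}\ge1$ and let $p^{(0)}\in Q$ satisfy $v_{p^{(0)}}=v_{\max}$. Let $b\in\mathbb{N}$. Then $$\mathcal{P}\bigl(\exists i: c^{(i)}\ge b\ \wedge\ \forall j\le i: c^{(j)}\ge1 \ \big|\ \mathrm{Run}(p^{(0)}(c^{(0)}))\bigr)\ \ge\ \frac{1}{b+1+|v|},$$ where $c^{(i)}$ denotes the counter value of the $i$-th configuration of a run.
   Context: A pOC is $\mathcal{A}=(Q,\delta^{=0},\delta^{>0},P^{=0},P^{>0})$ with the following components. - $\delta^{>0}\subseteq Q\times\{-1,0,1\}\times Q$ are the positive rules and $\delta^{=0}\subseteq Q\times\{0,1\}\times Q$ are the zero rules. Every state has both kinds of outgoing rule. - $P^{>0}$ and $P^{=0}$ are positive probability distributions over the outgoing rules of each state. $\mathcal{M}_\mathcal{A}$ is the Markov chain on configurations $p(i)$ with the following transitions: - $p(0)\to q(c)$ with probability $P^{=0}(p,c,q)$; - for $i\ge1$, $p(i)\to q(i+c)$ with probability $P^{>0}(p,c,q)$. $\mathrm{Run}(r(c))$ is the set of runs starting in $r(c)$. $[p{\downarrow}]$ is the probability that a run from $p(1)$ eventually reaches counter value $0$. $\mathcal{X}$ is the finite Markov chain on $Q$ with transition matrix $A_{pq}=\sum_cP^{>0}(p,c,q)$.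 With $\alpha$ its invariant distribution and $s_p=\sum_{(p,c,q)\in\delta^{>0}}P^{>0}(p,c,q)c$, the trend is $t=\alpha s$. A potential is $v\in\mathbb{R}^Q$ with $s+Av=v+\mathbf{1}t$. $v_{\max}$ and $v_{\min}$ are its largest and smallest components. *)

(* Defs.v *)
From HB Require Import structures.
From mathcomp Require Import all_boot all_order all_algebra.
From mathcomp Require Import classical_sets reals.
Set Implicit Arguments. Unset Strict Implicit. Unset Printing Implicit Defensive.
Import Order.TTheory GRing.Theory Num.Theory.
Local Open Scope ring_scope.

Section POC.
Variables (R : realType) (Q : finType).
(* A pOC is given by its two families of rule probabilities:
   Pz p c q = P^{=0}(p,c,q)  (zero rules),   Pp p c q = P^{>0}(p,c,q) (positive rules).
   The rule sets delta^{=0}, delta^{>0} are the supports. *)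
Variables (Pz Pp : Q -> int -> Q -> R).

Definition pos_dirs : seq int := [:: (-1)%R; 0%R; 1%R].
Definition zero_dirs : seq int := [:: 0%R; 1%R].

Definition is_pOC : Prop :=
  (forall p c q, 0 <= Pz p c q) /\
  [/\ (forall p c q, 0 <= Pp p c q),
      (forall p c q, Pz p c q != 0 -> c \in zero_dirs),
      (forall p c q, Pp p c q != 0 -> c \in pos_dirs),
      (forall p, \sum_(q : Q) \sum_(c <- zero_dirs) Pz p c q = 1) &
      (forall p, \sum_(q : Q) \sum_(c <- pos_dirs) Pp p c q = 1)].

Definition shift (i : nat) (c : int) : nat := `|(i%:Z + c)%R|%N.

Definition succ_exp (g : Q -> nat -> R) (p : Q) (i : nat) : R :=
  if i is 0 then \sum_(q : Q) \sum_(c <- zero_dirs) Pz p c q * g q (shift 0 c)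
  else \sum_(q : Q) \sum_(c <- pos_dirs) Pp p c q * g q (shift i c).

(* Probability, from configuration p(i), of the event
   "exists k <= n, T(x_k) /\ forall j <= k, S(x_j)" (finite horizon n). *)
Fixpoint until_n (S T : Q -> nat -> bool) (n : nat) (p : Q) (i : nat) : R :=
  match n with
  | 0 => if S p i && T p i then 1 else 0
  | n'.+1 => if S p i && T p i then 1
             else if S p i then succ_exp (until_n S T n') p i else 0
  end.

(* Probability of "exists k, T(x_k) /\ forall j <= k, S(x_j)" over Run(p(i)):
   the limit (= supremum) of the finite-horizon probabilities. *)
Definition until_prob (S T : Q -> nat -> bool) (p : Q) (i : nat) : R :=
  sup (range (fun n => until_n S T n p i)).

Definition term_prob (p : Q) : R :=
  until_prob (fun _ _ => true) (fun _ i => i == 0%N) p 1.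

Definition Amat (p q : Q) : R := \sum_(c <- pos_dirs) Pp p c q.

Definition strongly_connected : Prop :=
  forall p q : Q, connect (fun x y => 0 < Amat x y) p q.

Definition invariant_dist (alpha : Q -> R) : Prop :=
  [/\ (forall q, 0 <= alpha q), \sum_(q : Q) alpha q = 1 &
      forall q, \sum_(p : Q) alpha p * Amat p q = alpha q].

Definition svec (p : Q) : R := \sum_(q : Q) \sum_(c <- pos_dirs) Pp p c q * c%:~R.

Definition trend (alpha : Q -> R) : R := \sum_(p : Q) alpha p * svec p.

Definition is_potential (t : R) (v : Q -> R) : Prop :=
  forall p, svec p + \sum_(q : Q) Amat p q * v q = v p + t.

End POC.

Definition vmax (R : realType) (Q : finType) (v : Q -> R) (x0 : Q) : R :=
  \big[Num.max/v x0]_(q : Q) v q.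
Definition vmin (R : realType) (Q : finType) (v : Q -> R) (x0 : Q) : R :=
  \big[Num.min/v x0]_(q : Q) v q.

(* Main.v *)
Require Import Defs.
From HB Require Import structures.
From mathcomp Require Import all_boot all_order all_algebra.
From mathcomp Require Import classical_sets reals.
From mathcomp Require Import ring lra zify.
From Stdlib Require Import Classical.
Import Order.TTheory GRing.Theory Num.Theory.
Local Open Scope ring_scope.

Lemma shm1 i : (0 < i)%N -> shift i (-1) = i.-1.
Proof. rewrite /shift. move=> h. lia. Qed.
Lemma sh0 i : shift i 0 = i.
Proof. rewrite /shift. lia. Qed.
Lemma sh1 i : shift i 1 = i.+1.
Proof. rewrite /shift. lia. Qed.

Section S.
Variables (R : realType) (Q : finType) (Pz Pp : Q -> int -> Q -> R).
Hypothesis HP : is_pOC Pz Pp.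

Lemma sum_pos_dirs (F : int -> R) :
  \sum_(c <- pos_dirs) F c = F (-1) + F 0 + F 1.
Proof. by rewrite /pos_dirs !big_cons big_nil addr0 addrA. Qed.

Lemma Pp_ge0 p c q : 0 <= Pp p c q.
Proof. by case: HP => _ [] . Qed.

Lemma rowsum p : \sum_(q : Q) (Pp p (-1) q + Pp p 0 q + Pp p 1 q) = 1.
Proof.
case: HP => _ [_ _ _ _ H]; rewrite -(H p); apply: eq_bigr => q _.
by rewrite sum_pos_dirs.
Qed.

Lemma succE g p i : (0 < i)%N ->
  succ_exp Pz Pp g p i =
  \sum_(q : Q) (Pp p (-1) q * g q i.-1 + Pp p 0 q * g q i + Pp p 1 q * g q i.+1).
Proof.
case: i => // i _ /=; apply: eq_bigr => q _.
by rewrite sum_pos_dirs shm1 // sh0 sh1.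
Qed.

Definition stopped (b i : nat) := (i == 0)%N || (b <= i)%N.

Fixpoint E (b n : nat) (g : Q -> nat -> R) (p : Q) (i : nat) : R :=
  match n with
  | 0 => g p i
  | n'.+1 => if stopped b i then g p i else succ_exp Pz Pp (E b n' g) p i
  end.

Lemma nstop b i : ~~ stopped b i -> (0 < i)%N.
Proof. by rewrite /stopped; case: i. Qed.

Lemma E_stop b n g p i : stopped b i -> E b n g p i = g p i.
Proof. by case: n => //= n ->. Qed.

Lemma E_ext b n f g : (forall q j, f q j = g q j) ->
  forall p i, E b n f p i = E b n g p i.
Proof.
move=> H; elim: n => [|n IH] p i //=.
case: ifP => hs; first exact: H. have hi := @nstop b i (negbT hs); rewrite !succE //.
by apply: eq_bigr => q _; rewrite !IH.
Qed.

Lemma E_lin b n k a c f g p i :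
  E b n (fun q j => k + a * f q j + c * g q j) p i =
  k + a * E b n f p i + c * E b n g p i.
Proof.
elim: n p i => [|n IH] p i //=.
case: ifP => // hs; have hi := @nstop b i (negbT hs); rewrite !succE //.
rewrite (eq_bigr (fun q => k * (Pp p (-1) q + Pp p 0 q + Pp p 1 q) +
   a * (Pp p (-1) q * E b n f q i.-1 + Pp p 0 q * E b n f q i + Pp p 1 q * E b n f q i.+1) +
   c * (Pp p (-1) q * E b n g q i.-1 + Pp p 0 q * E b n g q i + Pp p 1 q * E b n g q i.+1))); last first.
  by move=> q _; rewrite !IH; ring.
by rewrite big_split [X in X + _ = _]big_split /= -!mulr_sumr rowsum mulr1.
Qed.

Lemma E_mono b n f g : (forall q j, f q j <= g q j) ->
  forall p i, E b n f p i <= E b n g p i.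
Proof.
move=> H; elim: n => [|n IH] p i //=.
case: ifP => hs; first exact: H. have hi := @nstop b i (negbT hs); rewrite !succE //.
apply: ler_sum => q _.
by rewrite !lerD // ler_wpM2l // Pp_ge0.
Qed.

Lemma E_comp b m n g p i : E b (m + n) g p i = E b m (E b n g) p i.
Proof.
elim: m p i => [|m IH] p i //=.
case: ifP => hs; first by rewrite E_stop.
have hi := @nstop b i (negbT hs); rewrite !succE //.
by apply: eq_bigr => q _; rewrite !IH.
Qed.

Lemma E_const b n k p i : E b n (fun _ _ => k) p i = k.
Proof.
rewrite (@E_ext b n _ (fun q j => k + 0 * (fun _ _ => 0) q j + 0 * (fun _ _ => 0) q j)).
  by rewrite E_lin !mul0r !addr0.
by move=> q j; rewrite !mul0r !addr0.
Qed.


Lemma submart b (v : Q -> R) (t m : R) p i :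
  is_potential Pp t v -> (0 < i)%N -> (i < b)%N ->
  succ_exp Pz Pp (fun q j => (minn j b)%:R + v q - m) p i =
  (minn i b)%:R + v p - m + t.
Proof.
move=> Hpot hi hib.
have e1 : minn i.-1 b = i.-1 by lia.
have e2 : minn i b = i by lia.
have e3 : minn i.+1 b = i.+1 by lia.
have n1 : (i.-1)%:R = i%:R - 1 :> R by rewrite -{2}(prednK hi) -natr1 addrK.
have n3 : (i.+1)%:R = i%:R + 1 :> R by rewrite natr1.
rewrite succE // e1 e2 e3 n1 n3.
rewrite (eq_bigr (fun q => (Pp p (-1) q + Pp p 0 q + Pp p 1 q) * (i%:R - m) +
   ((Pp p (-1) q * (-1)%:~R + Pp p 0 q * 0%:~R + Pp p 1 q * 1%:~R) +
    (Pp p (-1) q + Pp p 0 q + Pp p 1 q) * v q))); last first.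
  by move=> q _ /=; ring.
rewrite big_split /= -mulr_suml rowsum mul1r big_split /=.
have -> : \sum_q (Pp p (-1) q * (-1)%:~R + Pp p 0 q * 0%:~R + Pp p 1 q * 1%:~R) = svec Pp p.
  by rewrite /svec; apply: eq_bigr => q _; rewrite sum_pos_dirs.
have -> : \sum_q (Pp p (-1) q + Pp p 0 q + Pp p 1 q) * v q = \sum_q Amat Pp p q * v q.
  by apply: eq_bigr => q _; rewrite /Amat sum_pos_dirs.
rewrite Hpot; ring.
Qed.

Definition Wf (b : nat) := fun (_ : Q) (j : nat) => if (b <= j)%N then 1 else 0 : R.
Definition Uf (b : nat) := fun (_ : Q) (j : nat) => if stopped b j then 0 else 1 : R.

Lemma until_E b n p i : (0 < b)%N ->
  until_n Pz Pp (fun _ i => (1 <= i)%N) (fun _ i => (b <= i)%N) n p i = E b n (Wf b) p i.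
Proof.
move=> hb; elim: n p i => [|n IH] p i.
  by case: i => [|i] /=; rewrite /Wf //= leqNgt hb.
case: i => [|i] /=.
  by rewrite /stopped /Wf /= leqNgt hb.
rewrite /stopped /Wf /=; case: ifP => // _.
by rewrite (_ : until_n _ _ _ _ n = E b n (Wf b)) //; apply/boolp.funext => q; apply/boolp.funext => j; exact: IH.
Qed.

Lemma E_01 b n f p i : (forall q j, 0 <= f q j <= 1) -> 0 <= E b n f p i <= 1.
Proof.
move=> H; apply/andP; split.
  rewrite -(E_const b n 0 p i); apply: E_mono => q j; by case/andP: (H q j).
rewrite -(E_const b n 1 p i); apply: E_mono => q j; by case/andP: (H q j).
Qed.

Lemma Uf01 b q j : 0 <= Uf b q j <= 1.
Proof. by rewrite /Uf; case: ifP; rewrite ?lexx ?ler01. Qed.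

Lemma V01 b n p i : 0 <= E b n (Uf b) p i <= 1.
Proof. apply: E_01 => q j; exact: Uf01. Qed.

Lemma V_dec b n p i : E b n.+1 (Uf b) p i <= E b n (Uf b) p i.
Proof.
rewrite -addn1 E_comp; apply: E_mono => q j /=.
case: ifP => hs; first exact: lexx.
have hj := @nstop b j (negbT hs); rewrite succE //.
have -> : Uf b q j = 1 by rewrite /Uf hs.
rewrite -[X in _ <= X](rowsum q); apply: ler_sum => r _; rewrite /Uf.
have h1 : forall c k, Pp q c r * (if stopped b k then 0 else 1) <= Pp q c r.
  by move=> c k; apply: ler_piMr; [exact: Pp_ge0| case: ifP; rewrite ?ler01].
by rewrite !lerD.
Qed.

Lemma V_mono b m n p i : (m <= n)%N -> E b n (Uf b) p i <= E b m (Uf b) p i.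
Proof.
elim: n => [|n IH]; first by rewrite leqn0 => /eqP ->.
rewrite leq_eqVlt => /orP [/eqP ->|]; first exact: lexx.
rewrite ltnS => /IH; apply: le_trans; exact: V_dec.
Qed.

Definition Mset b q j := (0 < j)%N /\ (j < b)%N /\ forall n, E b n (Uf b) q j = 1.

Lemma closure b r m q : Mset b r m ->
  [/\ Pp r (-1) q != 0 -> Mset b q m.-1,
      Pp r 0 q != 0 -> Mset b q m &
      Pp r 1 q != 0 -> Mset b q m.+1].
Proof.
move=> [hm [hmb HV]].
have ns : stopped b m = false by rewrite /stopped; apply/negbTE; lia.
have key : forall n, [/\ Pp r (-1) q * (1 - E b n (Uf b) q m.-1) = 0,
   Pp r 0 q * (1 - E b n (Uf b) q m) = 0 &
   Pp r 1 q * (1 - E b n (Uf b) q m.+1) = 0].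
  move=> n; have := HV n.+1; rewrite /= ns succE // => Hs.
  have Hz : \sum_q0 (Pp r (-1) q0 * (1 - E b n (Uf b) q0 m.-1) +
     Pp r 0 q0 * (1 - E b n (Uf b) q0 m) + Pp r 1 q0 * (1 - E b n (Uf b) q0 m.+1)) = 0.
    rewrite (eq_bigr (fun q0 => (Pp r (-1) q0 + Pp r 0 q0 + Pp r 1 q0) -
       (Pp r (-1) q0 * E b n (Uf b) q0 m.-1 + Pp r 0 q0 * E b n (Uf b) q0 m +
        Pp r 1 q0 * E b n (Uf b) q0 m.+1))); last by move=> q0 _; ring.
    by rewrite sumrB rowsum Hs subrr.
  have nn : forall c k q0, 0 <= Pp r c q0 * (1 - E b n (Uf b) q0 k).
    move=> c k q0; apply: mulr_ge0; first exact: Pp_ge0.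
    by case/andP: (V01 b n q0 k) => _; rewrite subr_ge0.
  have := @psumr_eq0P _ _ xpredT _ (fun q0 _ => addr_ge0 (addr_ge0 (nn _ _ _) (nn _ _ _)) (nn _ _ _)) Hz q isT.
  have := nn (-1) m.-1 q; have := nn 0 m q; have := nn 1 m.+1 q.
  move=> a1 a2 a3 hsum; split; lra.
have gen : forall k c, (forall n, Pp r c q * (1 - E b n (Uf b) q k) = 0) ->
    Pp r c q != 0 -> Mset b q k.
  move=> k c Hk hne.
  have Hn : forall n, E b n (Uf b) q k = 1.
    move=> n; move/eqP: (Hk n); rewrite mulf_eq0 (negbTE hne) /= subr_eq0.
    by move/eqP <-.
  have := Hn 0%N; rewrite /= /Uf /stopped; case: ifP.
    by move=> _ /eqP; rewrite eq_sym oner_eq0.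
  move=> /negbT; rewrite negb_or -ltnNge => /andP [h1 h2] _.
  split; [lia|split]; by [].
split.
- by apply: (gen _ (-1)) => n; case: (key n).
- by apply: (gen _ 0) => n; case: (key n).
- by apply: (gen _ 1) => n; case: (key n).
Qed.

Lemma no_M b : (forall p, 0 < term_prob Pz Pp p) -> forall j q, ~ Mset b q j.
Proof.
move=> Hterm; elim/ltn_ind => j IHj q HM.
have hj : (0 < j)%N by case: HM.
have key : forall n r k, (0 < k)%N -> Mset b r (k + j.-1) ->
    until_n Pz Pp (fun _ _ => true) (fun _ i => i == 0%N) n r k = 0.
  elim=> [|n IHn] r k hk HMr; first by case: k hk HMr.
  case: k hk HMr => // k _ HMr.
  transitivity (succ_exp Pz Pp (until_n Pz Pp (fun _ _ => true) (fun _ i => i == 0%N) n) r k.+1); first by [].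
  rewrite succE //=; apply: big1 => q0 _.
  have [c1 c2 c3] := closure b r _ q0 HMr.
  have t1 : Pp r (-1) q0 * until_n Pz Pp (fun _ _ => true) (fun _ i => i == 0%N) n q0 k = 0.
    case: (eqVneq (Pp r (-1) q0) 0) => [->|hne]; first by rewrite mul0r.
    have := c1 hne; case: k {HMr c1 c2 c3} => [|k] HM2.
      rewrite add1n /= in HM2; have hlt : (j.-1 < j)%N by lia.
      by case: (IHj _ hlt q0 HM2).
    by rewrite IHn ?mulr0 //; rewrite addSn /= in HM2.
  have t2 : Pp r 0 q0 * until_n Pz Pp (fun _ _ => true) (fun _ i => i == 0%N) n q0 k.+1 = 0.
    case: (eqVneq (Pp r 0 q0) 0) => [->|hne]; first by rewrite mul0r.
    by rewrite IHn ?mulr0 //; exact: c2.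
  have t3 : Pp r 1 q0 * until_n Pz Pp (fun _ _ => true) (fun _ i => i == 0%N) n q0 k.+2 = 0.
    case: (eqVneq (Pp r 1 q0) 0) => [->|hne]; first by rewrite mul0r.
    by rewrite IHn ?mulr0 //; have := c3 hne; rewrite addSn.
  by rewrite t1 t2 t3 !addr0.
have : term_prob Pz Pp q <= 0.
  apply: ge_sup.
    by exists (until_n Pz Pp (fun _ _ => true) (fun _ i => i == 0%N) 0 q 1); exists 0%N.
  move=> y [n _ <-]; rewrite key //; rewrite add1n prednK //.
by rewrite leNgt Hterm.
Qed.

Lemma claimA b : (forall p, 0 < term_prob Pz Pp p) ->
  forall q j, exists n, E b n (Uf b) q j < 1.
Proof.
move=> Hterm q j; apply: NNPP => Hne.
have Hall : forall n, E b n (Uf b) q j = 1.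
  move=> n; apply/eqP; rewrite eq_le; case/andP: (V01 b n q j) => _ -> /=.
  by rewrite leNgt; apply/negP => h; apply: Hne; exists n.
case hs: (stopped b j).
  by have := Hall 0%N; rewrite /= /Uf hs => /eqP; rewrite eq_sym oner_eq0.
apply: (no_M b Hterm j q); split; first exact: (@nstop b j (negbT hs)).
split => //; move: hs; rewrite /stopped => /negbT; rewrite negb_or -ltnNge.
by case/andP.
Qed.

Lemma succ_mono f g p i : (forall q j, f q j <= g q j) -> (0 < i)%N ->
  succ_exp Pz Pp f p i <= succ_exp Pz Pp g p i.
Proof.
move=> H hi; rewrite !succE //; apply: ler_sum => q _.
by rewrite !lerD // ler_wpM2l // Pp_ge0.
Qed.

Lemma E_geh b (v : Q -> R) t m : is_potential Pp t v -> 0 <= t ->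
  forall n p i, (minn i b)%:R + v p - m <= E b n (fun q j => (minn j b)%:R + v q - m) p i.
Proof.
move=> Hpot ht; elim=> [|n IH] p i /=; first exact: lexx.
case: ifP => hs; first exact: lexx.
have hi := @nstop b i (negbT hs).
have hib : (i < b)%N by move: hs; rewrite /stopped => /negbT; rewrite negb_or -ltnNge => /andP [].
apply: le_trans (succ_mono (fun q j => (minn j b)%:R + v q - m) _ p _ IH hi).
by rewrite (submart b v t m p i Hpot hi hib) lerDl.
Qed.

Lemma decay b N th : 0 <= th ->
  (forall q j, (j < b)%N -> E b N (Uf b) q j <= th) ->
  forall k q j, E b (k * N) (Uf b) q j <= th ^+ k * Uf b q j.
Proof.
move=> th0 HN; elim=> [|k IH] q j.
  by rewrite mul0n /= expr0 mul1r.
rewrite mulSn E_comp.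
apply: le_trans (E_mono b N (E b (k * N) (Uf b)) (fun q j => 0 + th ^+ k * Uf b q j + 0 * Uf b q j) _ q j) _.
  by move=> q0 j0; rewrite add0r mul0r addr0; exact: IH.
rewrite E_lin add0r mul0r addr0 exprSr -mulrA ler_wpM2l ?exprn_ge0 //.
case hs: (stopped b j).
  by rewrite E_stop // /Uf hs mulr0.
have hjb : (j < b)%N by move: hs; rewrite /stopped => /negbT; rewrite negb_or -ltnNge => /andP [].
by rewrite /Uf hs mulr1; exact: HN.
Qed.

End S.
Arguments E {R Q} Pz Pp b n g p i.
Arguments Uf {R Q} b _ _.
Arguments Wf {R Q} b _ _.
Arguments stopped : clear implicits.

Lemma fin_unif (T : finType) (P : nat -> T -> Prop) :
  (forall x m n, (m <= n)%N -> P m x -> P n x) -> (forall x, exists n, P n x) ->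
  exists N, forall x, P N x.
Proof.
move=> Hm Hex.
suff: forall s : seq T, exists N, forall x, x \in s -> P N x.
  by case/(_ (enum T)) => N HN; exists N => x; apply: HN; rewrite mem_enum.
elim=> [|y s [N HN]]; first by exists 0%N.
case: (Hex y) => n Hn; exists (maxn N n) => x; rewrite in_cons => /orP [/eqP ->|hx].
  by apply: Hm Hn; exact: leq_maxr.
by apply: Hm (HN x hx); exact: leq_maxl.
Qed.

Lemma fin_max (R : realType) (T : finType) (f : T -> R) : (forall x, f x < 1) ->
  exists th, [/\ 0 <= th, th < 1 & forall x, f x <= th].
Proof.
move=> H.
suff: forall s : seq T, exists th, [/\ 0 <= th, th < 1 & forall x, x \in s -> f x <= th].
  by case/(_ (enum T)) => th [h1 h2 h3]; exists th; split => // x; apply: h3; rewrite mem_enum.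
elim=> [|y s [th [h1 h2 h3]]]; first by exists 0; split => //; rewrite ltr01.
case: (leP th (f y)) => hy.
  exists (f y); split => //; first exact: le_trans hy.
  move=> x; rewrite in_cons => /orP [/eqP ->|hx]; first exact: lexx.
  exact: le_trans (h3 x hx) hy.
exists th; split => // x; rewrite in_cons => /orP [/eqP ->|hx]; last exact: h3.
exact: ltW.
Qed.

Lemma geo (R : realType) (th d : R) : 0 <= th -> th < 1 -> 0 < d -> exists k, th ^+ k <= d.
Proof.
move=> h0 h1 hd.
have Hk : forall k, th ^+ k * (1 + k%:R * (1 - th)) <= 1.
  elim=> [|k IH]; first by rewrite expr0 mul0r addr0 mul1r.
  rewrite exprS -natr1.
  have hk : 0 <= (k%:R : R) by [].
  have ha : 0 <= th ^+ k by exact: exprn_ge0.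
  have hh : 0 <= th ^+ k * ((1 - th) * (1 - th) * (k%:R + 1)).
    by apply: mulr_ge0 => //; apply: mulr_ge0; [apply: mulr_ge0|]; lra.
  nra.
set x := (d * (1 - th))^-1.
have hx : 0 <= x by rewrite invr_ge0; apply: mulr_ge0; lra.
have := archi_boundP hx; set k := Num.bound x => hxk.
exists k.
have := Hk k; set A := 1 + k%:R * (1 - th) => HA.
have hdA : 1 <= A * d.
  have : x * (d * (1 - th)) = 1 by rewrite mulVf //; apply: lt0r_neq0; apply: mulr_gt0; lra.
  move=> hxx; rewrite /A.
  have : x * (d * (1 - th)) <= k%:R * (d * (1 - th)).
    by rewrite ler_pM2r ?ltW //; apply: mulr_gt0; lra.
  nra.
have ha : 0 <= th ^+ k by exact: exprn_ge0.
nra.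
Qed.

Lemma h_bound (R : realType) (v vm vM t B W U : R) j b :
  (0 < b)%N -> B = b%:R -> vm <= v -> v <= vM ->
  W = (if (b <= j)%N then 1 else 0) ->
  U = (if ((j == 0)%N || (b <= j)%N) then 0 else 1) ->
  (minn j b)%:R + v - vm <= (vM - vm) + B * W + (B - 1) * U.
Proof.
move=> hb -> h1 h2 -> ->.
case: j => [|j] /=.
  by rewrite min0n leqNgt hb /=; lra.
case: (leqP b j.+1) => hj; first lra.
have : (j.+2)%:R <= b%:R :> R by rewrite ler_nat.
by rewrite -natr1 => hjB; lra.
Qed.

Lemma final_arith (R : realType) (B a Wn Vn U C : R) : 2 <= B -> 0 <= a -> 0 <= Wn -> 0 <= Vn ->
  Vn * (B * B) <= 1 -> 1 <= C -> C + a <= a + B * Wn + (B - 1) * Vn -> Wn <= U ->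
  1 <= U * (B + 1 + a).
Proof.
move=> hB ha hW hV HV hC Hc HWU.
have e1 : 1 <= B * Wn + (B - 1) * Vn by lra.
have e3 : (B + 1) * 1 <= (B + 1) * (B * Wn + (B - 1) * Vn) by rewrite ler_wpM2l //; lra.
have e5 : Vn * (B * B) - (B + 1) * ((B - 1) * Vn) = Vn by ring.
have e6 : (B + 1) * (B * Wn + (B - 1) * Vn) = B * ((B + 1) * Wn) + (B + 1) * ((B - 1) * Vn) by ring.
have e4 : B * 1 <= B * ((B + 1) * Wn) by lra.
rewrite ler_pM2l in e4; last by lra.
have e7 : Wn * (B + 1 + a) <= U * (B + 1 + a) by apply: ler_wpM2r => //; lra.
have e8 : Wn * (B + 1 + a) = (B + 1) * Wn + Wn * a by ring.
have e9 : 0 <= Wn * a by apply: mulr_ge0.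
lra.
Qed.

Theorem mainTheorem14 (R : realType) (Q : finType) (Pz Pp : Q -> int -> Q -> R)
  (alpha v : Q -> R) (p0 : Q) (c0 b : nat) :
  is_pOC Pz Pp ->
  strongly_connected Pp ->
  invariant_dist Pp alpha ->
  0 <= trend Pp alpha ->
  (forall p, 0 < term_prob Pz Pp p) ->
  is_potential Pp (trend Pp alpha) v ->
  (1 <= c0)%N ->
  v p0 = vmax v p0 ->
  1 / (b%:R + 1 + (vmax v p0 - vmin v p0)) <=
    until_prob Pz Pp (fun _ i => (1 <= i)%N) (fun _ i => (b <= i)%N) p0 c0.
Proof.
move=> HP _ _ ht Hterm Hpot hc0 Hp0.
set vM := vmax v p0; set vm := vmin v p0.
have HvM : forall q, v q <= vM by move=> q; exact: (le_bigmax (v p0) v q).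
have Hvm : forall q, vm <= v q by move=> q; exact: (bigmin_le (v p0) q v).
set a := vM - vm.
have ha : 0 <= a by rewrite /a subr_ge0; have := Hvm p0; rewrite Hp0.
have hB0 : 0 <= (b%:R : R) by [].
have hpos : 0 < b%:R + 1 + a by lra.
rewrite ler_pdivrMr //.
case: (leqP b c0) => hbc.
  have H1 : forall n, until_n Pz Pp (fun _ i => (1 <= i)%N) (fun _ i => (b <= i)%N) n p0 c0 = 1.
    by case=> [|n] /=; rewrite hc0 hbc.
  have hs : 1 <= until_prob Pz Pp (fun _ i => (1 <= i)%N) (fun _ i => (b <= i)%N) p0 c0.
    apply: (ub_le_sup); last by exists 0%N.
    by exists 1 => y [n _ <-]; rewrite H1.
  have h1 : 1 <= b%:R + 1 + a by lra.
  apply: le_trans h1 _; rewrite -[X in X <= _]mul1r; apply: ler_wpM2r => //; lra.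
have hb : (0 < b)%N by lia.
have [N HN] := @fin_unif (Q * 'I_b)%type
   (fun n x => E Pz Pp b n (Uf b) x.1 x.2 < 1)
   (fun x m n hmn h => le_lt_trans (@V_mono R Q Pz Pp HP b m n x.1 x.2 hmn) h)
   (fun x => @claimA R Q Pz Pp HP b Hterm x.1 x.2).
have [th [th0 th1 Hth]] := @fin_max R _ (fun x : Q * 'I_b => E Pz Pp b N (Uf b) x.1 x.2) HN.
have Hdec := @decay R Q Pz Pp HP b N th th0 (fun q j hj => Hth (q, Ordinal hj)).
set B := (b%:R : R).
have hB2 : 2 <= B by rewrite /B (ler_nat R 2 b); lia.
have hd : 0 < 1 / (B * B) by apply: divr_gt0 => //; apply: mulr_gt0; lra.
have [k Hk] := @geo R th _ th0 th1 hd.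
set n := (k * N)%N.
set Wn := E Pz Pp b n (Wf b) p0 c0.
set Vn := E Pz Pp b n (Uf b) p0 c0.
have HV : Vn <= 1 / (B * B).
  apply: le_trans (Hdec k p0 c0) _; apply: le_trans Hk.
  by apply: ler_piMr; [exact: exprn_ge0 | case/andP: (@Uf01 R Q b p0 c0)].
have HV' : Vn * (B * B) <= 1.
  by rewrite -ler_pdivlMr // mulr_gt0 //; lra.
have HV0 : 0 <= Vn by case/andP: (@V01 R Q Pz Pp HP b n p0 c0).
have HWf : forall q j, 0 <= @Wf R Q b q j <= 1.
  by move=> q j; rewrite /Wf; case: ifP; rewrite ?lexx ?ler01.
have HW0 : 0 <= Wn by case/andP: (@E_01 R Q Pz Pp HP b n (Wf b) p0 c0 HWf).
have Hh := @E_geh R Q Pz Pp HP b v _ vm Hpot ht n p0 c0.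
have Hup : E Pz Pp b n (fun q j => (minn j b)%:R + v q - vm) p0 c0 <=
    a + B * Wn + (B - 1) * Vn.
  rewrite /Wn /Vn -E_lin; last exact: HP.
  apply: (@E_mono R Q Pz Pp HP b n) => q j.
  exact: (@h_bound R (v q) vm vM 0 B (Wf b q j) (Uf b q j) j b hb erefl (Hvm q) (HvM q) erefl erefl).
rewrite (minn_idPl (ltnW hbc)) in Hh.
have hC : 1 <= (c0%:R : R) by rewrite ler1n.
have HWU : Wn <= until_prob Pz Pp (fun _ i => (1 <= i)%N) (fun _ i => (b <= i)%N) p0 c0.
  rewrite /Wn -(@until_E R Q Pz Pp b n p0 c0 hb).
  apply: ub_le_sup; last by exists n.
  exists 1 => y [m _ <-]; rewrite (@until_E R Q Pz Pp b m p0 c0 hb).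
  by case/andP: (@E_01 R Q Pz Pp HP b m (Wf b) p0 c0 HWf).
have Hc : c0%:R + a <= a + B * Wn + (B - 1) * Vn.
  apply: le_trans Hup; apply: le_trans Hh.
  by rewrite /a Hp0 addrA lexx.
clearbody Wn Vn B a.
exact: (@final_arith R B a Wn Vn _ _ hB2 ha HW0 HV0 HV' hC Hc HWU).
Qed.
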